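(* Let $\kappa^+\ge\kappa^-\ge2$, $\alpha_j,\beta_i\ge1$ for all $i,j$, and $\mathcal{L}\in P_2(2\alpha_1,\ldots,2\alpha_{\kappa^+};-2\beta_1,\ldots,-2\beta_{\kappa^-})$. Then $E(\mathcal{L})=-1+\kappa^--\kappa^++2\sum_i\beta_i$ with $p^h(\mathcal{L})\in F$, and $e(\mathcal{L})=1+\kappa^--\kappa^+-2\sum_j\alpha_j$ with $(-1)^{\kappa^++\kappa^-+1}p^\ell(\mathcal{L})\in F$.
   Context: Pretzel diagrams: vertical strips of crossings side by side, consecutive strips joined at facing upper and lower ends, outermost ends joined by a long top and a long bottom strand; standard means the top long strand is oriented right to left. Type 2: the Seifert circles containing the top and bottom long strands are distinct with the same orientation (equivalently each strip has an even number of crossings, all smoothed horizontally). $P_2(2\alpha_1,\ldots,2\alpha_{\kappa^+};-2\beta_1,\ldots,-2\beta_{\kappa^-})$ ($\alpha_j,\beta_i\ge1$) is the set of links with a standard Type 2 pretzel diagram having $\kappa^+$ strips of $2\alpha_j$ positive crossings and $\kappa^-$ strips of $2\beta_i$ negative crossings. HOMFLY-PT: $aH(D_+)-a^{-1}H(D_-)=zH(D_0)$, $H(\text{unknot})=1$. $E,e$ are the highest/lowest $a$-degrees of $H(\mathcal{L},z,a)$ and $p^h,p^\ell$ the corresponding coefficients. $F$ is the set of nonzero Laurent polynomials in $z$ with nonnegative coefficients. *)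

(* Defs.v *)
From mathcomp Require Import all_boot all_order all_algebra.
Set Implicit Arguments. Unset Strict Implicit. Unset Printing Implicit Defensive.
Import Order.TTheory GRing.Theory Num.Theory.
Local Open Scope ring_scope.

(* Two-variable Laurent polynomials in z and a with integer coefficients,
   represented by their coefficient function: (p i j) is the coefficient
   of z^i a^j. *)
Definition LP := int -> int -> int.

Definition lp_one : LP := fun i j => ((i == 0) && (j == 0))%:R.
Definition lp_add (p q : LP) : LP := fun i j => p i j + q i j.
Definition lp_sub (p q : LP) : LP := fun i j => p i j - q i j.
(* multiplication by the monomial z^di a^dj *)
Definition lp_shift (di dj : int) (p : LP) : LP := fun i j => p (i - di) (j - dj).

(* HOMFLY-PT of the n-component unlink: ((a - a^-1)/z)^(n-1). *)
Definition lp_unlink (n : nat) : LP :=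
  iter n.-1 (fun p => lp_sub (lp_shift (-1) 1 p) (lp_shift (-1) (-1) p)) lp_one.

Definition remove_nth (s : seq int) (k : nat) := take k s ++ drop k.+1 s.

(* A standard Type 2 pretzel diagram is encoded by the left-to-right list s of
   its strips, entry x meaning a strip of |x| crossings, all positive if x > 0
   and all negative if x < 0 (x even; 0 = two parallel vertical arcs).
   HOMFLY-PT via the skein relation a H(D+) - a^-1 H(D-) = z H(D0) applied to
   a crossing of the first nonzero strip:
   - switching it gives (after Reidemeister II) the strip with |x|-2 crossings;
   - the oriented (horizontal) smoothing deletes the strip (remaining crossings
     become Reidemeister I kinks);
   - a diagram with only zero strips (m >= 1 of them) is the m-component
     unlink; the diagram with no strip at all (only the two long strands)
     is the 2-component unlink. *)
Fixpoint homfly_fuel (n : nat) (s : seq int) : LP :=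
  if n is n'.+1 then
    let k := find (fun x => x != 0) s in
    if (k < size s)%N then
      let x := nth 0 s k in
      if 0 < x then
        lp_add (lp_shift 0 (-2) (homfly_fuel n' (set_nth 0 s k (x - 2))))
               (lp_shift 1 (-1) (homfly_fuel n' (remove_nth s k)))
      else
        lp_sub (lp_shift 0 2 (homfly_fuel n' (set_nth 0 s k (x + 2))))
               (lp_shift 1 1 (homfly_fuel n' (remove_nth s k)))
    else lp_unlink (if s is [::] then 2 else size s)
  else lp_one.

(* the fuel is always sufficient: each step lowers sum |x| + size by >= 1 *)
Definition homfly_pretzel2 (s : seq int) : LP :=
  homfly_fuel (sumn (map absz s) + size s)%N.+1 s.

Definition inF (c : int -> int) : Prop :=
  (exists i, c i != 0) /\ (forall i, 0 <= c i).

(* E(H) = d with coefficient p^h:  d is the highest a-degree *)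
Definition top_a_degree (H : LP) (d : int) : Prop :=
  (exists i, H i d != 0) /\ (forall j, d < j -> forall i, H i j = 0).
Definition bot_a_degree (H : LP) (d : int) : Prop :=
  (exists i, H i d != 0) /\ (forall j, j < d -> forall i, H i j = 0).

(* strip list of a standard Type 2 pretzel diagram in
   P_2(2 alpha_1, ..., 2 alpha_k+; -2 beta_1, ..., -2 beta_k-),
   strips in an arbitrary left-to-right order *)
Definition is_P2_diagram (alpha beta : seq nat) (s : seq int) : bool :=
  perm_eq s ([seq (2 * a)%:Z | a <- alpha] ++ [seq - (2 * b)%:Z | b <- beta]).

(* Main.v *)
Require Import Defs.
From mathcomp Require Import all_boot all_order all_algebra zify ring.
Import Order.TTheory GRing.Theory Num.Theory.
Set Implicit Arguments. Unset Strict Implicit. Unset Printing Implicit Defensive.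
Local Open Scope ring_scope.

Lemma unlink_prop (m : nat) :
  [/\ forall i j, (m%:Z < j) -> lp_unlink m.+1 i j = 0,
      forall i j, (j < - m%:Z) -> lp_unlink m.+1 i j = 0,
      forall i, lp_unlink m.+1 i m = (i == - m%:Z)%:R &
      forall i, lp_unlink m.+1 i (- m%:Z) = (-1) ^+ m * (i == - m%:Z)%:R].
Proof.
elim: m => [|m [IH1 IH2 IH3 IH4]].
  rewrite /lp_unlink /= /lp_one; split.
  - by move=> i j h; rewrite (_ : (j == 0) = false) ?andbF //; lia.
  - by move=> i j h; rewrite (_ : (j == 0) = false) ?andbF //; lia.
  - by move=> i; rewrite andbT oppr0.
  - by move=> i; rewrite mul1r andbT oppr0.
have E : forall i j, lp_unlink m.+2 i j = lp_unlink m.+1 (i + 1) (j - 1) - lp_unlink m.+1 (i+1) (j+1).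
  by move=> i j; rewrite /lp_unlink /= /lp_sub /lp_shift /= !opprK.
split => i *; rewrite E.
- by rewrite IH1 ?IH1 ?subr0 //; lia.
- by rewrite IH2 ?IH2 ?subr0 //; lia.
- rewrite (IH1 _ (_ + 1)); last lia.
  have -> : (m.+1%:Z - 1) = m%:Z by lia.
  rewrite IH3 subr0; congr (_%:R); apply/eqP/eqP; lia.
- rewrite (IH2 _ (_ - 1)); last lia.
  have -> : (- m.+1%:Z + 1) = - m%:Z by lia.
  rewrite IH4 sub0r exprS mulN1r mulNr; congr (- (_ * _%:R)); apply/eqP/eqP; lia.
Qed.

Notation HF := homfly_fuel.
Definition Tc (x : int) : int := if x <= 0 then 1 - x else -1.
Definition Dg (s : seq int) : int := \sum_(x <- s) Tc x - 1.
Definition npos (s : seq int) : nat := count (fun x : int => x <= 0) s.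
Definition Dp (s : seq int) : int := Dg s + 2 * (nat_of_bool (npos s == 0%N))%:Z.
Definition mu (s : seq int) : nat := (\sum_(x <- s) (absz x).+1)%N.
Definition ev (s : seq int) : bool := all (fun x : int => (2 %| x)%Z) s.

Lemma sumI (F : int -> int) l y r :
  \sum_(z <- l ++ y :: r) F z = F y + \sum_(z <- l ++ r) F z.
Proof. by rewrite !big_cat big_cons addrCA. Qed.
Lemma sumN (F : int -> nat) l y r :
  (\sum_(z <- l ++ y :: r) F z = F y + \sum_(z <- l ++ r) F z)%N.
Proof. by rewrite !big_cat big_cons addnCA. Qed.
Lemma countI (p : pred int) l y r :
  count p (l ++ y :: r) = (p y + count p (l ++ r))%N.
Proof. by rewrite !count_cat /= addnCA. Qed.
Lemma evI l y r : ev (l ++ y :: r) = (2 %| y)%Z && ev (l ++ r).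
Proof. by rewrite /ev !all_cat /= andbCA. Qed.

Lemma stepD n s : (find (fun x : int => x != 0) s < size s)%N ->
  exists l x r, [/\ s = l ++ x :: r, x != 0 &
    forall i j, HF n.+1 s i j =
     if 0 < x then HF n (l ++ (x - 2) :: r) i (j + 2) + HF n (l ++ r) (i - 1) (j + 1)
     else HF n (l ++ (x + 2) :: r) i (j - 2) - HF n (l ++ r) (i - 1) (j - 1)].
Proof.
move=> hk.
set k := find _ s in hk.
have hx : nth 0 s k != 0 by apply: (@nth_find _ 0 (fun x : int => x != 0)); rewrite has_find.
exists (take k s), (nth 0 s k), (drop k.+1 s); split => //.
  by rewrite -drop_nth // cat_take_drop.
move=> i j; rewrite /= -/k hk /remove_nth !set_nthE hk.
case: ifP => _; rewrite /lp_add /lp_sub /lp_shift !subr0 ?opprK //.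
Qed.

Lemma base n s : (find (fun x : int => x != 0) s >= size s)%N ->
  s = nseq (size s) 0 /\ HF n.+1 s = lp_unlink (if s is [::] then 2 else size s).
Proof.
move=> hk.
have hs : s = nseq (size s) 0.
  apply/all_pred1P; apply/allP => x xs /=.
  have : ~~ has (fun x : int => x != 0) s by rewrite has_find -leqNgt.
  by move/hasPn/(_ x xs); rewrite negbK.
split=> //; rewrite /=.
by have -> : (find (fun x : int => x != 0) s < size s)%N = false by apply/negbTE; rewrite -leqNgt.
Qed.

Lemma TcP y : (y <= 0 -> Tc y = 1 - y) /\ (0 < y -> Tc y = -1).
Proof. by rewrite /Tc; split => h; [rewrite h | rewrite leNgt h]. Qed.

Ltac prep x := rewrite ?/Dp ?/Dg ?/npos ?/mu ?sumI ?sumN ?countI ?evI;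
  have := TcP x; have := TcP (x - 2); have := TcP (x + 2).

Lemma sum_nseq0 (F : int -> int) m : \sum_(z <- nseq m 0) F z = m%:Z * F 0.
Proof. elim: m => [|m IH]; first by rewrite big_nil mul0r.
by rewrite /= big_cons IH -addn1 PoszD mulrDl mul1r addrC. Qed.

Lemma topB n s : (mu s < n)%N -> ev s -> forall i j, Dp s < j -> HF n s i j = 0.
Proof.
elim: n s => [//|n IH] s hmu hev i j hj.
case: (ltnP (find (fun x : int => x != 0) s) (size s)) => hk.
  have [l [x [r [hs hx hstep]]]] := @stepD n s hk.
  rewrite hstep; subst s; move: hmu hev hj; prep x => T1 T2 T3 hmu /andP[h2 hev] hj.
  case: ifP => hx0.
    by rewrite (IH (l ++ (x-2)::r)) ?(IH (l ++ r)) ?addr0 //; prep x; lia.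
  by rewrite (IH (l ++ (x+2)::r)) ?(IH (l ++ r)) ?subr0 //; prep x; lia.
have [hs ->] := @base n s hk.
move: hj; rewrite /Dp /Dg /npos hs count_nseq sum_nseq0 size_nseq /Tc lexx subr0 mulr1.
case: (size s) => [|m] /= hj.
  by have [->] := unlink_prop 1 => //; lia.
by have [->] := unlink_prop m => //; lia.
Qed.

Definition FF (f : int -> int) := (exists i, f i != 0) /\ (forall i, 0 <= f i).
Lemma FF_ext f g : (forall i, g i = f i) -> FF f -> FF g.
Proof. by move=> e [[i hi] h]; split; [exists i; rewrite e | move=> k; rewrite e]. Qed.
Lemma FF_shift f : FF f -> FF (fun i => f (i - 1)).
Proof. by move=> [[i hi] h]; split => //; exists (i + 1); rewrite addrK. Qed.
Lemma FF_add f g : FF f -> (forall i, 0 <= g i) -> FF (fun i => f i + g i).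
Proof.
move=> [[i hi] h] hg; split; last by move=> k; rewrite addr_ge0.
exists i; apply: contra hi => /eqP e; apply/eqP.
by apply: le_anti; rewrite h andbT -e lerDl.
Qed.
Lemma FF_addr f g : FF g -> (forall i, 0 <= f i) -> FF (fun i => f i + g i).
Proof. by move=> h1 h2; apply: (FF_ext _ (FF_add h1 h2)) => i; rewrite addrC. Qed.

Lemma topQ n s : (mu s < n)%N -> ev s -> (2 <= npos s)%N ->
  FF (fun i => HF n s i (Dg s)).
Proof.
elim: n s => [//|n IH] s hmu hev hnp.
case: (ltnP (find (fun x : int => x != 0) s) (size s)) => hk.
  have [l [x [r [hs hx hstep]]]] := @stepD n s hk.
  have hD := hstep^~ (Dg s); rewrite hs in hD.
  subst s; set G := FF _; move: hmu hev hnp; prep x => T1 T2 T3 hmu /andP[h2 hev] hnp.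
  rewrite {}/G.
  have [hx0|hx0] := boolP (0 < x); [rewrite hx0 in hD | rewrite (negbTE hx0) in hD].
    have e2 : Dg (l ++ x :: r) + 1 = Dg (l ++ r) by prep x; lia.
    have hr : FF (fun i => HF n (l ++ r) (i - 1) (Dg (l ++ x :: r) + 1)).
      rewrite e2; apply: (FF_shift (f := fun k => HF n (l ++ r) k (Dg (l ++ r)))).
      by apply: (IH (l ++ r)); prep x; lia.
    have [x2|x2] : x = 2 \/ 2 < x by lia.
      have e1 : Dg (l ++ x :: r) + 2 = Dg (l ++ (x - 2) :: r) by prep x; lia.
      apply: (FF_ext hD); rewrite e1; apply: FF_add.
        by apply: (IH (l ++ (x - 2) :: r)); prep x; lia.
      by move=> i; move: hr => [_ ->].
    apply: (FF_ext hD); apply: (FF_ext _ hr) => i.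
    by rewrite (topB (s := l ++ (x - 2) :: r)) ?add0r //; prep x; lia.
  have e1 : Dg (l ++ x :: r) - 2 = Dg (l ++ (x + 2) :: r) by prep x; lia.
  apply: (FF_ext hD); apply: (FF_ext _ (IH (l ++ (x + 2) :: r) _ _ _)) => [i|||].
  - by rewrite e1 (topB (s := l ++ r)) ?subr0 //; prep x; lia.
  - by prep x; lia.
  - by prep x; lia.
  - by prep x; lia.
have [hs ->] := @base n s hk.
move: hnp; rewrite /Dg /npos hs count_nseq sum_nseq0 size_nseq /Tc lexx subr0 mulr1.
case: (size s) => [|[|m]] //= _.
have -> : m.+2%:Z - 1 = m.+1 by lia.
have [_ _ U _] := unlink_prop m.+1.
split; last by move=> i; rewrite U ler0n.
by exists (- m.+1%:Z); rewrite U eqxx oner_eq0.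
Qed.

Definition Tb (x : int) : int := if 0 <= x then - x - 1 else 1.
Definition Db (s : seq int) : int := \sum_(x <- s) Tb x + 1.
Definition nneg (s : seq int) : nat := count (fun x : int => 0 <= x) s.
Definition Dbp (s : seq int) : int := Db s - 2 * (nat_of_bool (nneg s == 0%N))%:Z.

Lemma TbP y : (0 <= y -> Tb y = - y - 1) /\ (y < 0 -> Tb y = 1).
Proof. by rewrite /Tb; split => h; [rewrite h | rewrite leNgt h]. Qed.

Ltac prepb x := rewrite ?/Dbp ?/Db ?/nneg ?/mu ?sumI ?sumN ?countI ?evI;
  have := TbP x; have := TbP (x - 2); have := TbP (x + 2).

Lemma botB n s : (mu s < n)%N -> ev s -> forall i j, j < Dbp s -> HF n s i j = 0.
Proof.
elim: n s => [//|n IH] s hmu hev i j hj.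
case: (ltnP (find (fun x : int => x != 0) s) (size s)) => hk.
  have [l [x [r [hs hx hstep]]]] := @stepD n s hk.
  rewrite hstep; subst s; move: hmu hev hj; prepb x => T1 T2 T3 hmu /andP[h2 hev] hj.
  case: ifP => hx0.
    by rewrite (IH (l ++ (x-2)::r)) ?(IH (l ++ r)) ?addr0 //; prepb x; lia.
  by rewrite (IH (l ++ (x+2)::r)) ?(IH (l ++ r)) ?subr0 //; prepb x; lia.
have [hs ->] := @base n s hk.
move: hj; rewrite /Dbp /Db /nneg hs count_nseq sum_nseq0 size_nseq /Tb lexx oppr0 sub0r mulrN1.
case: (size s) => [|m] /= hj.
  by have [_ ->] := unlink_prop 1 => //; lia.
by have [_ ->] := unlink_prop m => //; lia.
Qed.

Lemma botQ n s : (mu s < n)%N -> ev s -> (2 <= nneg s)%N ->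
  FF (fun i => (-1) ^+ (size s).+1 * HF n s i (Db s)).
Proof.
elim: n s => [//|n IH] s hmu hev hnp.
case: (ltnP (find (fun x : int => x != 0) s) (size s)) => hk.
  have [l [x [r [hs hx hstep]]]] := @stepD n s hk.
  have hD := hstep^~ (Db s); rewrite hs in hD.
  subst s; set G := FF _; move: hmu hev hnp; prepb x => T1 T2 T3 hmu /andP[h2 hev] hnp.
  rewrite {}/G.
  have hsz : size (l ++ x :: r) = (size (l ++ r)).+1 by rewrite !size_cat /= addnS.
  have [hx0|hx0] := boolP (0 < x); [rewrite hx0 in hD | rewrite (negbTE hx0) in hD].
    have e1 : Db (l ++ x :: r) + 2 = Db (l ++ (x - 2) :: r) by prepb x; lia.
    apply: (FF_ext _ (IH (l ++ (x - 2) :: r) _ _ _)) => [i|||].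
    - by rewrite hD e1 (botB (s := l ++ r)) ?addr0 ?size_cat //; prepb x; lia.
    - by prepb x; lia.
    - by prepb x; lia.
    - by prepb x; lia.
  have hx1 : x <= 0 by rewrite leNgt.
  have e2 : Db (l ++ x :: r) - 1 = Db (l ++ r) by prepb x; lia.
  have hr : FF (fun i => (-1) ^+ (size (l ++ r)).+1 * HF n (l ++ r) (i - 1) (Db (l ++ x :: r) - 1)).
    rewrite e2; apply: (FF_shift (f := fun k => (-1) ^+ (size (l ++ r)).+1 * HF n (l ++ r) k (Db (l ++ r)))).
    by apply: (IH (l ++ r)); prepb x; lia.
  have [x2|x2] : x = -2 \/ x < -2 by lia.
    have e1 : Db (l ++ x :: r) - 2 = Db (l ++ (x + 2) :: r) by prepb x; lia.
    have hl : FF (fun i => (-1) ^+ (size (l ++ x :: r)).+1 * HF n (l ++ (x + 2) :: r) i (Db (l ++ x :: r) - 2)).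
      rewrite e1 (_ : size (l ++ x :: r) = size (l ++ (x + 2) :: r)); last by rewrite !size_cat.
      by apply: (IH (l ++ (x + 2) :: r)); prepb x; lia.
    apply: (FF_ext _ (FF_add hl (fun i => proj2 hr i))) => i.
    by rewrite hD hsz; set A := HF _ _ _ _; set B := HF _ _ _ _; rewrite !exprS; ring.
  apply: (FF_ext _ hr) => i.
  rewrite hD hsz (botB (s := l ++ (x + 2) :: r)) ?sub0r; last by prepb x; lia.
    by rewrite exprS; ring.
  by prepb x; lia.
  by prepb x; lia.
have [hs ->] := @base n s hk.
move: hnp; rewrite /Db /nneg hs count_nseq sum_nseq0 size_nseq /Tb lexx oppr0 sub0r mulrN1.
case: (size s) => [|[|m]] //= _.
have -> : - m.+2%:Z + 1 = - m.+1%:Z by lia.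
have [_ _ _ U] := unlink_prop m.+1.
have sg : forall i, (-1) ^+ m.+3 * lp_unlink m.+2 i (- m.+1%:Z) = (i == - m.+1%:Z)%:R.
  by move=> i; rewrite U mulrA -exprD (_ : (m.+3 + m.+1 = 2 * m.+2)%N) ?exprM ?sqrrN1 ?expr1n ?mul1r //; lia.
split; last by move=> i; rewrite sg ler0n.
by exists (- m.+1%:Z); rewrite sg eqxx oner_eq0.
Qed.

Lemma muE s : mu s = (sumn (map absz s) + size s)%N.
Proof. elim: s => [|x s IH]; first by rewrite /mu big_nil. by rewrite /mu big_cons -/(mu s) IH /=; lia. Qed.

Lemma sumA (F : int -> int) (alpha : seq nat) c d :
  all (fun x => 0 < x)%N alpha -> (forall a, (0 < a)%N -> F (2 * a)%:Z = c + d * a%:Z) ->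
  \sum_(x <- [seq (2 * a)%:Z | a <- alpha]) F x = (size alpha)%:Z * c + d * (sumn alpha)%:Z.
Proof.
move=> + hF; elim: alpha => [|a al IH] /=; first by rewrite big_nil; lia.
by move=> /andP[ha hal]; rewrite big_cons IH // hF //; lia.
Qed.
Lemma sumB (F : int -> int) (beta : seq nat) c d :
  all (fun x => 0 < x)%N beta -> (forall a, (0 < a)%N -> F (- (2 * a)%:Z) = c + d * a%:Z) ->
  \sum_(x <- [seq - (2 * a)%:Z | a <- beta]) F x = (size beta)%:Z * c + d * (sumn beta)%:Z.
Proof.
move=> + hF; elim: beta => [|a al IH] /=; first by rewrite big_nil; lia.
by move=> /andP[ha hal]; rewrite big_cons IH // hF //; lia.
Qed.

Theorem proposition4p3 (alpha beta : seq nat) (s : seq int) :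
  (2 <= size beta)%N -> (size beta <= size alpha)%N ->
  all (fun x => 0 < x)%N alpha -> all (fun x => 0 < x)%N beta ->
  is_P2_diagram alpha beta s ->
  let H := homfly_pretzel2 s in
  let E : int := -1 + (size beta)%:Z - (size alpha)%:Z + 2 * (sumn beta)%:Z in
  let e : int := 1 + (size beta)%:Z - (size alpha)%:Z - 2 * (sumn alpha)%:Z in
  [/\ top_a_degree H E, inF (fun i => H i E),
      bot_a_degree H e &
      inF (fun i => (-1) ^+ (size alpha + size beta).+1 * H i e)].
Proof.
move=> hb hba ha hbp hp.
have hmu : (mu s < (sumn (map absz s) + size s).+1)%N by rewrite muE.
have hev : ev s.
  rewrite /ev (perm_all _ hp) all_cat !all_map; apply/andP; split.
    by apply/allP => a _ /=; lia.
  by apply/allP => a _ /=; lia.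
have hsz : size s = (size alpha + size beta)%N by rewrite (perm_size hp) size_cat !size_map.
have hnp : npos s = size beta.
  rewrite /npos (permP hp) count_cat !count_map.
  rewrite (@eq_in_count _ _ pred0) ?count_pred0; last by move=> a /(allP ha) /=; lia.
  rewrite (@eq_in_count _ _ predT) ?count_predT //; by move=> b /(allP hbp) /=; lia.
have hnn : nneg s = size alpha.
  rewrite /nneg (permP hp) count_cat !count_map.
  rewrite (@eq_in_count _ _ predT) ?count_predT; last by move=> a /(allP ha) /=; lia.
  rewrite (@eq_in_count _ _ pred0) ?count_pred0 ?addn0 //; by move=> b /(allP hbp) /=; lia.
move=> H E e; rewrite {}/H /homfly_pretzel2.
have hE : Dg s = E.
  rewrite /Dg (perm_big _ hp) big_cat /= (sumA (c := -1) (d := 0) ha) ?(sumB (c := 1) (d := 2) hbp) /E; first lia.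
    by move=> b hb0; have := TcP (- (2 * b)%:Z); lia.
  by move=> a ha0; have := TcP (2 * a)%:Z; lia.
have he : Db s = e.
  rewrite /Db (perm_big _ hp) big_cat /= (sumA (c := -1) (d := -2) ha) ?(sumB (c := 1) (d := 0) hbp) /e; first lia.
    by move=> b hb0; have := TbP (- (2 * b)%:Z); lia.
  by move=> a ha0; have := TbP (2 * a)%:Z; lia.
have Q := topQ hmu hev (n := _.+1); rewrite hnp hE in Q.
have Qb := botQ hmu hev; rewrite hnn he in Qb.
have [Q1 Q2] := Q hb; have [Qb1 Qb2] := Qb (leq_trans hb hba).
split.
- split=> // j hj i; apply: (topB hmu hev); rewrite /Dp hE hnp; lia.
- by split.
- split; last by move=> j hj i; apply: (botB hmu hev); rewrite /Dbp he hnn; lia.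
  by case: Qb1 => i hi; exists i; apply: contraNneq hi => ->; rewrite mulr0.
- by rewrite -hsz; split.
Qed.
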